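(* With $k(c)$ as defined below, $\dfrac{1}{k(c)}\log\left|r_1(c)r_2(c)\cdots r_{k(c)}(c)\right|\to\log 2$ as $c\to-2$, $c<-2$.
   Context: For real $c<-2$ let $f_c(z)=z^2+c$ and $r_n(c)=f_c^{\circ n}(0)$, so $r_1(c)=c$ and $r_{n+1}(c)=r_n(c)^2+c$. For $-3<c<-2$, $k(c)$ denotes the smallest positive integer $k$ such that $r_{k+1}(c)/r_k(c)\ge 36$. *)

(* Defs.v *)
From Stdlib Require Import Reals Lra.
Open Scope R_scope.

(* r n c = f_c^{n}(0), f_c(z) = z^2 + c; so r 0 c = 0 and r 1 c = c. *)
Fixpoint r (n : nat) (c : R) : R :=
  match n with
  | O => 0
  | S m => (r m c) ^ 2 + c
  end.

Fixpoint prod_r (k : nat) (c : R) : R :=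
  match k with
  | O => 1
  | S m => prod_r m c * r (S m) c
  end.

Definition is_k (c : R) (k : nat) : Prop :=
  (1 <= k)%nat /\ r (S k) c / r k c >= 36 /\
  (forall j : nat, (1 <= j)%nat -> (j < k)%nat -> r (S j) c / r j c < 36).

(* Main.v *)
Require Import Defs.
From Stdlib Require Import Reals.
From Stdlib Require Import Lra Lia Psatz Wf_nat Classical ZArith.
Open Scope R_scope.

Lemma nat_arch : forall x : R, exists n : nat, x < INR n.
Proof.
  intro x. destruct (archimed x) as [H1 _].
  destruct (Z_le_gt_dec 0 (up x)) as [Hz|Hz].
  - exists (Z.to_nat (up x)). rewrite INR_IZR_INZ, Z2Nat.id by lia. lra.
  - exists 0%nat. simpl. assert (Hz2 : (up x < 0)%Z) by lia. apply IZR_lt in Hz2. lra.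
Qed.

Lemma ln_le' : forall x y, 0 < x -> x <= y -> ln x <= ln y.
Proof.
  intros x y Hx Hxy. destruct (Rle_lt_or_eq_dec _ _ Hxy) as [H|H].
  - left; apply ln_increasing; auto.
  - subst; lra.
Qed.

Lemma div_ge : forall a b, a > 0 -> b / a >= 36 -> b >= 36 * a.
Proof.
  intros a b Ha H. unfold Rdiv in H.
  assert (Hi : a * / a = 1) by (field; lra).
  assert (b = (b * / a) * a) by (field; lra). nra.
Qed.

Lemma div_lt : forall a b, a > 0 -> b / a < 36 -> b < 36 * a.
Proof.
  intros a b Ha H. unfold Rdiv in H.
  assert (b = (b * / a) * a) by (field; lra). nra.
Qed.

Lemma ge_div : forall a b, a > 0 -> b >= 36 * a -> b / a >= 36.
Proof.
  intros a b Ha H. unfold Rdiv.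
  assert (0 < / a) by (apply Rinv_0_lt_compat; lra).
  assert (Hi : a * / a = 1) by (field; lra). nra.
Qed.

Section S.
Variable c : R.
Hypothesis Hc1 : -3 < c.
Hypothesis Hc2 : c < -2.

Lemma d_ge : forall m, r (S (S m)) c - 2 >= -2 - c.
Proof.
  induction m.
  - simpl. nra.
  - change (r (S (S (S m))) c) with ((r (S (S m)) c) ^ 2 + c).
    set (d := r (S (S m)) c - 2) in *.
    replace (r (S (S m)) c) with (2 + d) by (unfold d; ring). nra.
Qed.

Lemma d_step : forall m, r (S (S (S m))) c - 2 >= 3 * (r (S (S m)) c - 2).
Proof.
  intro m. pose proof (d_ge m).
  change (r (S (S (S m))) c) with ((r (S (S m)) c) ^ 2 + c).
  set (d := r (S (S m)) c - 2) in *.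
  replace (r (S (S m)) c) with (2 + d) by (unfold d; ring). nra.
Qed.

Lemma r_ge2 : forall m, r (S (S m)) c >= 2.
Proof. intro m. pose proof (d_ge m). lra. Qed.

Lemma d_pow3 : forall m, r (S (S m)) c - 2 >= 3 ^ m * (-2 - c).
Proof.
  induction m.
  - pose proof (d_ge 0). rewrite pow_O. lra.
  - pose proof (d_step m). change (3 ^ S m) with (3 * 3 ^ m).
    rewrite Rmult_assoc. lra.
Qed.

Lemma d_pow5 : forall m, 5 ^ (m+2) * (-2 - c) <= 1 ->
  r (S (S m)) c - 2 <= 5 ^ (m+2) * (-2 - c).
Proof.
  induction m; intro H.
  - simpl. nra.
  - replace (S m + 2)%nat with (S (m + 2)) in * by lia.
    change (5 ^ S (m+2)) with (5 * 5 ^ (m+2)) in *.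
    rewrite Rmult_assoc in *.
    assert (0 < 5 ^ (m+2) * (-2 - c)) by (apply Rmult_lt_0_compat; [apply pow_lt|]; lra).
    assert (Hm : 5 ^ (m + 2) * (-2 - c) <= 1) by lra.
    specialize (IHm Hm). pose proof (d_ge m).
    change (r (S (S (S m))) c) with ((r (S (S m)) c) ^ 2 + c).
    set (d := r (S (S m)) c - 2) in *.
    replace (r (S (S m)) c) with (2 + d) by (unfold d; ring). nra.
Qed.

Lemma prod_lower : forall m, Rabs (prod_r (S m) c) >= 2 ^ (S m).
Proof.
  induction m.
  - simpl. rewrite Rmult_1_l, Rmult_1_r. rewrite Rabs_left by lra. lra.
  - change (prod_r (S (S m)) c) with (prod_r (S m) c * r (S (S m)) c).
    rewrite Rabs_mult. pose proof (r_ge2 m).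
    rewrite (Rabs_right (r (S (S m)) c)) by lra.
    change (2 ^ S (S m)) with (2 * 2 ^ S m).
    pose proof (pow_lt 2 (S m)). nra.
Qed.

Lemma prod_upper : forall m,
  Rabs (prod_r (S (S m)) c) <= 2 ^ (S (S m)) * exp (r (S (S m)) c - 1).
Proof.
  induction m.
  - change (prod_r 2 c) with (1 * r 1 c * r 2 c).
    pose proof (r_ge2 0). pose proof (d_ge 0).
    set (d := r 2 c - 2) in *.
    replace (r 2 c) with (2 + d) by (unfold d; ring).
    change (r 1 c) with (0 ^ 2 + c). replace (0 ^ 2 + c) with c by ring.
    rewrite !Rabs_mult, Rabs_R1, (Rabs_left c) by lra.
    rewrite (Rabs_right (2 + d)) by lra.
    pose proof (exp_ineq1_le ((-2 - c)/2)).
    pose proof (exp_ineq1_le (d/2)).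
    pose proof (exp_ineq1_le (2 + c/2 + d/2)).
    replace (2 + d - 1) with ((-2 - c)/2 + d/2 + (2 + c/2 + d/2)) by field.
    set (C := 2 + c/2 + d/2) in *.
    rewrite !exp_plus.
    assert (0 < exp ((-2 - c)/2)) by apply exp_pos.
    assert (0 < exp (d/2)) by apply exp_pos.
    assert (1 <= exp C) by (unfold C in *; lra).
    simpl.
    assert (-c <= 2 * exp ((-2 - c)/2)) by lra.
    assert (2 + d <= 2 * exp (d/2)) by lra.
    assert (1 * - c * (2 + d) <= (2 * exp ((-2 - c)/2)) * (2 * exp (d/2))) by nra.
    assert (0 <= exp ((-2 - c)/2) * exp (d/2)) by nra.
    nra.
  - change (prod_r (S (S (S m))) c) with (prod_r (S (S m)) c * r (S (S (S m))) c).
    rewrite Rabs_mult. pose proof (r_ge2 (S m)). pose proof (d_step m).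
    pose proof (d_ge m).
    rewrite (Rabs_right (r (S (S (S m))) c)) by lra.
    set (a := r (S (S m)) c) in *. set (b := r (S (S (S m))) c) in *.
    pose proof (exp_ineq1_le ((b - 2)/2)).
    assert (Hb : b <= 2 * exp ((b-2)/2)) by lra.
    assert (Hexp : exp (a - 1) * exp ((b-2)/2) <= exp (b - 1)).
    { rewrite <- exp_plus.
      destruct (Rle_lt_or_eq_dec (a - 1 + (b-2)/2) (b-1)) as [Hl|Hl]; [lra| |].
      - left; apply exp_increasing; auto.
      - rewrite Hl; lra. }
    change (2 ^ S (S (S m))) with (2 * 2 ^ S (S m)).
    pose proof (pow_lt 2 (S (S m))).
    assert (0 <= Rabs (prod_r (S (S m)) c)) by apply Rabs_pos.
    assert (0 < exp (a-1)) by apply exp_pos.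
    assert (0 < exp ((b-2)/2)) by apply exp_pos.
    assert (Rabs (prod_r (S (S m)) c) * b <= (2 ^ S (S m) * exp (a - 1)) * (2 * exp ((b - 2) / 2))).
    { apply Rmult_le_compat; lra. }
    nra.
Qed.

End S.

Lemma pow3_ge : forall m, INR m <= 3 ^ m.
Proof.
  induction m.
  - simpl; lra.
  - rewrite S_INR. pose proof (pow_R1_Rle 3 m). simpl. lra.
Qed.

Theorem lemma1 :
  forall eps : R, eps > 0 ->
  exists delta : R, delta > 0 /\
    forall c : R, -3 < c -> -2 - delta < c -> c < -2 ->
      (exists k : nat, is_k c k) /\
      (forall k : nat, is_k c k ->
         Rabs (/ INR k * ln (Rabs (prod_r k c)) - ln 2) < eps).
Proof.
  intros eps Heps.
  destruct (nat_arch (1500/eps)) as [N0 HN0].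
  set (N := (N0 + 2)%nat).
  assert (HNp : 0 < 5 ^ (N+1)) by (apply pow_lt; lra).
  exists (/ 5 ^ (N+1)). split.
  { apply Rlt_gt, Rinv_0_lt_compat; auto. }
  intros c H1 H2 H3.
  assert (He : 5 ^ (N+1) * (-2 - c) < 1).
  { assert (-2 - c < / 5 ^ (N+1)) by lra.
    apply Rmult_lt_compat_l with (r := 5 ^ (N+1)) in H; auto.
    rewrite Rinv_r in H; lra. }
  assert (Hsmall : forall m, (S (S m) <= N)%nat -> r (S (S (S m))) c <= 3).
  { intros m Hm.
    assert (Hp : 5 ^ (S m + 2) <= 5 ^ (N+1)) by (apply Rle_pow; lia || lra).
    assert (5 ^ (S m + 2) * (-2 - c) <= 1) by nra.
    pose proof (d_pow5 c H1 H3 (S m) H).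
    assert (5 ^ (S m + 2) * (-2 - c) <= 1) by nra. lra. }
  split.
  - set (P := fun j => (1 <= j)%nat /\ r (S j) c / r j c >= 36).
    assert (HexP : exists n, P n).
    { destruct (nat_arch (40 / (-2 - c))) as [m Hm].
      exists (S (S m)). split; [lia|].
      pose proof (d_pow3 c H1 H3 m). pose proof (pow3_ge m).
      assert (40 < INR m * (-2 - c)).
      { apply Rmult_lt_compat_r with (r := -2 - c) in Hm; [|lra].
        unfold Rdiv in Hm. rewrite Rmult_assoc, Rinv_l in Hm; lra. }
      assert (INR m * (-2 - c) <= 3 ^ m * (-2 - c)) by (apply Rmult_le_compat_r; lra).
      apply ge_div; [lra|].
      change (r (S (S (S m))) c) with ((r (S (S m)) c) ^ 2 + c).
      set (a := r (S (S m)) c) in *. nra. }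
    destruct (dec_inh_nat_subset_has_unique_least_element P
                (fun n => classic (P n)) HexP) as [k [[Pk Hmin] _]].
    exists k. destruct Pk as [Pk1 Pk2]. split; [auto|split; [auto|]].
    intros j Hj1 Hj2. apply Rnot_ge_lt. intro Hc.
    assert (k <= j)%nat by (apply Hmin; split; auto). lia.
  - intros k [Hk1 [Hk2 Hk3]].
    assert (HkN : (N < k)%nat).
    { destruct (le_lt_dec k N) as [Hl|Hl]; auto. exfalso.
      destruct k as [|[|m]]; [lia| |].
      - replace (r 2 c / r 1 c) with (c + 1) in Hk2 by (simpl; field; lra). lra.
      - pose proof (Hsmall m Hl). pose proof (r_ge2 c H1 H3 m).
        pose proof (div_ge (r (S (S m)) c) _ ltac:(lra) Hk2). lra. }
    destruct k as [|[|[|p]]]; try (unfold N in HkN; lia).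
    pose proof (Hk3 (S (S p)) ltac:(lia) ltac:(lia)) as Hr.
    pose proof (r_ge2 c H1 H3 p).
    apply div_lt in Hr; [|lra].
    assert (Hrk : r (S (S (S p))) c < 1332).
    { change (r (S (S (S p))) c) with ((r (S (S p)) c) ^ 2 + c) in *.
      set (a := r (S (S p)) c) in *. nra. }
    pose proof (prod_lower c H1 H3 (S (S p))) as Hlo.
    pose proof (prod_upper c H1 H3 (S p)) as Hup.
    pose proof (r_ge2 c H1 H3 (S p)).
    set (K := S (S (S p))) in *.
    set (rk := r K c) in *.
    set (Pr := Rabs (prod_r K c)) in *.
    assert (H2K : 0 < 2 ^ K) by (apply pow_lt; lra).
    assert (Hl1 : INR K * ln 2 <= ln Pr).
    { rewrite <- ln_pow by lra. apply ln_le'; lra. }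
    assert (Hl2 : ln Pr <= INR K * ln 2 + (rk - 1)).
    { rewrite <- ln_pow by lra. rewrite <- (ln_exp (rk - 1)).
      rewrite <- ln_mult by (auto; apply exp_pos).
      apply ln_le'; [|auto]. lra. }
    assert (HK : INR N < INR K) by (apply lt_INR; auto).
    assert (HN : INR N0 <= INR N) by (apply le_INR; unfold N; lia).
    assert (HKpos : 0 < INR K) by (pose proof (pos_INR N0); lra).
    assert (Heps2 : 1500 < eps * INR K).
    { assert (Hq : 1500 / eps < INR K) by lra.
      apply Rmult_lt_compat_l with (r := eps) in Hq; auto.
      unfold Rdiv in Hq. rewrite <- Rmult_assoc, (Rmult_comm eps 1500), Rmult_assoc,
        Rinv_r in Hq; lra. }
    set (s := ln Pr - INR K * ln 2).
    replace (/ INR K * ln Pr - ln 2) with (s * / INR K) by (unfold s; field; lra).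
    assert (Hi : 0 < / INR K) by (apply Rinv_0_lt_compat; auto).
    assert (HiK : INR K * / INR K = 1) by (field; lra).
    assert (0 <= s <= 1331) by (unfold s; lra).
    apply Rabs_def1; nra.
Qed.
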